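(* Let $\epsilon\in(0,1)$ and let $W=[w_1,\dots,w_n]$ be a mass vector ($w_i\ge0$, $\sum_i w_i=1$) such that for every $\theta\in\Theta$ and every $\lambda\in[\kappa(\theta),\tau(\theta)]$, $$(1-\epsilon)H(\theta,\lambda)\le \tilde H(\theta,\lambda)\le (1+\epsilon)H(\theta,\lambda).$$ Then with $\tilde{\mathbb P}_n=\sum_i w_i\delta_{\xi_i}$ we have, for every $\theta\in\Theta$, $$(1-\epsilon)R^{\mathbb P_n}_{\sigma,p}(\theta)\le R^{\tilde{\mathbb P}_n}_{\sigma,p}(\theta)\le (1+\epsilon)R^{\mathbb P_n}_{\sigma,p}(\theta).$$
   Context: Setting: $\Xi=\mathbb X\times\mathbb Y$ with $\mathbb X\subseteq\mathbb R^m$, $\mathbb Y\subseteq\mathbb R$, metric $\mathtt d((x,y),(x',y'))=\|x-x'\|+\frac{\gamma}{2}|y-y'|$ ($\|\cdot\|$ a norm on $\mathbb R^m$, $\gamma>0$), $(\Xi,\mathtt d)$ complete. Fix $p\ge1$, $\sigma>0$, data $\xi_1,\dots,\xi_n\in\Xi$ with empirical distribution $\mathbb P_n=\frac1n\sum_i\delta_{\xi_i}$. Loss $\ell:\mathbb R^d\times\Xi\to[0,\infty)$, feasible set $\Theta\subseteq\mathbb R^d$. Assumption: $\ell(\theta,\cdot)$ continuous for each $\theta\in\Theta$, and there are a positive continuous $\mathtt C(\theta)$ and $\xi_0\in\Xi$ with $\ell(\theta,\xi)\le\mathtt C(\theta)(1+\mathtt d^p(\xi,\xi_0))$. The $p$-Wasserstein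 distance is $W_p(\mathbb P,\mathbb P')=(\inf_{\pi\in\Pi(\mathbb P,\mathbb P')}\int\mathtt d^p(\xi,\xi')\,\pi(d\xi,d\xi'))^{1/p}$; $\mathbb B_{\sigma,p}(\mathbb Q)$ is the set of Borel probability measures on $\Xi$ at $W_p$-distance at most $\sigma$ from $\mathbb Q$; the worst-case risk is $R^{\mathbb Q}_{\sigma,p}(\theta)=\sup_{\mathbb Q'\in\mathbb B_{\sigma,p}(\mathbb Q)}\mathbb E^{\mathbb Q'}[\ell(\theta,\xi)]$. Define $h(\theta,\lambda,\xi)=\sup_{\zeta\in\Xi}\{\ell(\theta,\zeta)-\lambda\mathtt d^p(\zeta,\xi)\}$, $h_i(\theta,\lambda)=h(\theta,\lambda,\xi_i)$, $H(\theta,\lambda)=\frac1n\sum_ih_i(\theta,\lambda)$, $\tilde H(\theta,\lambda)=\sum_iw_ih_i(\theta,\lambda)$. Known strong duality (used as a standing fact): for any distribution $\mathbb Q$ with finite $p$-th moment, $R^{\mathbb Q}_{\sigma,p}(\theta)=\inf_{\lambda\ge0}\{\lambda\sigma^p+\mathbb E^{\mathbb Q}[h(\theta,\lambda,\xi)]\}$. Define $\kappa(\theta)=\limsup_{\mathtt d(\xi,\xi_0)\to\infty}\frac{\ell(\theta,\xi)-\ell(\theta,\xi_0)}{\mathtt d^p(\xi,\xi_0)}$; it is assumed that $h_i(\theta,\kappa(\theta))<\infty$ for all $i,\theta$ (and $h_i(\theta,\lambda)=\infty$ for $\lambda<\kappa(\theta)$). Let $\rho=\max_i\mathtt d(\xi_i,\xi_0)$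 and $\tau(\theta)=\mathtt C(\theta)(2^{p-1}+\frac{1+2^{p-1}\rho^p}{\sigma^p})$. *)

(* Defs.v *)
From HB Require Import structures.
From mathcomp Require Import all_boot all_order all_algebra.
From mathcomp Require Import all_classical all_reals all_analysis.
Set Implicit Arguments. Unset Strict Implicit. Unset Printing Implicit Defensive.
Import Order.TTheory GRing.Theory Num.Theory.
Import numFieldNormedType.Exports.
Local Open Scope classical_set_scope.
Local Open Scope ring_scope.

Definition pt (R : realType) (m : nat) := ('rV[R]_m * R)%type.

Definition Borel (R : realType) (m : nat) :=
  g_sigma_algebraType (@open ('rV[R]_m * R)%type).

Definition is_norm (R : realType) (m : nat) (nrm : 'rV[R]_m -> R) : Prop :=
  [/\ forall x, 0 <= nrm x,
      forall x, nrm x = 0 -> x = 0,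
      forall (a : R) x, nrm (a *: x) = `|a| * nrm x &
      forall x y, nrm (x + y) <= nrm x + nrm y].

Definition dist (R : realType) (m : nat) (nrm : 'rV[R]_m -> R) (gamma : R)
  (z z' : pt R m) : R :=
  nrm (z.1 - z'.1) + gamma / 2 * `|z.2 - z'.2|.

Definition complete_in (R : realType) (m : nat) (d : pt R m -> pt R m -> R)
  (Xi : set (pt R m)) : Prop :=
  forall u : nat -> pt R m, (forall k, Xi (u k)) ->
    (forall e, 0 < e -> exists N, forall i j, (N <= i)%N -> (N <= j)%N ->
        d (u i) (u j) < e) ->
    exists2 z, Xi z & forall e, 0 < e -> exists N, forall k, (N <= k)%N ->
        d (u k) z < e.

Definition coupling (R : realType) (m : nat) (P Q : set (Borel R m) -> \bar R)
  (pi : probability (Borel R m * Borel R m)%type R) : Prop :=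
  forall A : set (Borel R m), measurable A ->
    pi (A `*` setT) = P A /\ pi (setT `*` A) = Q A.

Definition Wpp (R : realType) (m : nat) (d : pt R m -> pt R m -> R) (p : R)
  (P Q : set (Borel R m) -> \bar R) : \bar R :=
  ereal_inf [set x | exists pi : probability (Borel R m * Borel R m)%type R,
     coupling P Q pi /\ x = (\int[pi]_z ((d z.1 z.2) `^ p)%:E)%E].

(* Borel probability measures on Xi (i.e. concentrated on Xi) within
   W_p-distance sigma of Q; W_p <= sigma iff W_p^p <= sigma^p *)
Definition wball (R : realType) (m : nat) (d : pt R m -> pt R m -> R)
  (Xi : set (pt R m)) (p sigma : R) (Q : set (Borel R m) -> \bar R)
  : set (probability (Borel R m) R) :=
  [set P | P (~` Xi) = 0%E /\ (Wpp d p P Q <= (sigma `^ p)%:E)%E].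

Definition risk (R : realType) (m k : nat) (d : pt R m -> pt R m -> R)
  (Xi : set (pt R m)) (p sigma : R) (ell : 'rV[R]_k -> pt R m -> R)
  (Q : set (Borel R m) -> \bar R) (theta : 'rV[R]_k) : \bar R :=
  ereal_sup [set (\int[P]_z (ell theta z)%:E)%E | P in wball d Xi p sigma Q].

Definition wemp (R : realType) (m n : nat) (w : 'I_n -> R) (xi : 'I_n -> pt R m)
  : set (Borel R m) -> \bar R :=
  fun A => (\sum_(i < n) (w i)%:E * \d_(xi i : Borel R m) A)%E.

Definition hfun (R : realType) (m k : nat) (d : pt R m -> pt R m -> R)
  (Xi : set (pt R m)) (p : R) (ell : 'rV[R]_k -> pt R m -> R)
  (theta : 'rV[R]_k) (lam : R) (x : pt R m) : \bar R :=
  ereal_sup [set (ell theta z - lam * (d z x) `^ p)%:E | z in Xi].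

(* sum_i w_i h_i(theta, lambda) (H with w_i = 1/n, tilde H with w) *)
Definition Hw (R : realType) (m k n : nat) (d : pt R m -> pt R m -> R)
  (Xi : set (pt R m)) (p : R) (ell : 'rV[R]_k -> pt R m -> R)
  (w : 'I_n -> R) (xi : 'I_n -> pt R m) (theta : 'rV[R]_k) (lam : R) : \bar R :=
  (\sum_(i < n) (w i)%:E * hfun d Xi p ell theta lam (xi i))%E.

(* kappa(theta) = limsup_{d(xi,xi0) -> oo, xi in Xi}
     (ell(theta,xi) - ell(theta,xi0)) / d^p(xi,xi0) *)
Definition kappa (R : realType) (m k : nat) (d : pt R m -> pt R m -> R)
  (Xi : set (pt R m)) (p : R) (ell : 'rV[R]_k -> pt R m -> R)
  (xi0 : pt R m) (theta : 'rV[R]_k) : \bar R :=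
  ereal_inf [set ereal_sup
      [set ((ell theta z - ell theta xi0) / (d z xi0) `^ p)%:E
         | z in [set z | Xi z /\ M < d z xi0]]
    | M in [set M : R | 0 < M]].

Definition tau (R : realType) (m k n : nat) (d : pt R m -> pt R m -> R)
  (p sigma : R) (C : 'rV[R]_k -> R) (xi : 'I_n -> pt R m) (xi0 : pt R m)
  (theta : 'rV[R]_k) : R :=
  let rho := \big[Num.max/0]_(i < n) d (xi i) xi0 in
  C theta * (2 `^ (p - 1) + (1 + 2 `^ (p - 1) * rho `^ p) / sigma `^ p).

(* Main.v *)
Require Import Defs.
From HB Require Import structures.
From mathcomp Require Import all_boot all_order all_algebra.
From mathcomp Require Import all_classical all_reals all_analysis.
Import Order.TTheory GRing.Theory Num.Theory.
Import numFieldNormedType.Exports.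
From mathcomp Require Import lra.
Local Open Scope classical_set_scope.
Local Open Scope ring_scope.

Lemma powD_le (R : realType) (p a b : R) : 1 <= p -> 0 <= a -> 0 <= b ->
  (a + b) `^ p <= 2 `^ (p - 1) * (a `^ p + b `^ p).
Proof.
move=> p1 a0 b0.
have p0 : 0 < p by rewrite (lt_le_trans _ p1).
have -> : a + b = 2 * (2^-1 * a + 2^-1 * b).
  by rewrite -mulrDr mulrA mulfV ?mul1r.
rewrite powRM ?addr_ge0 ?mulr_ge0 ?invr_ge0//.
have cv : (2^-1 * a + 2^-1 * b) `^ p <= 2^-1 * a `^ p + 2^-1 * b `^ p.
  rewrite {2 4}(_ : 2^-1 = 1 - 2^-1 :> R); last by rewrite {2}(splitr 1) div1r addrK.
  by apply: (convex_powR p1 (Itv01 _ _)) => //=;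
    rewrite ?inE/= ?in_itv/= ?andbT ?invr_ge0// invf_le1 ?ler1n.
rewrite (le_trans (ler_wpM2l (powR_ge0 _ _) cv))//.
rewrite -mulrDr mulrA le_eqVlt; apply/orP; left; apply/eqP; congr (_ * _).
rewrite powRB; last by apply/implyP. by rewrite (@powRr1 _ 2).
Qed.

Lemma nrm0 (R : realType) m (nrm : 'rV[R]_m -> R) : is_norm nrm -> nrm 0 = 0.
Proof. by case=> _ _ hs _; rewrite -(scale0r (0 : 'rV[R]_m)) hs normr0 mul0r. Qed.

Lemma dist_ge0 (R : realType) m (nrm : 'rV[R]_m -> R) (gamma : R) z z' :
  is_norm nrm -> 0 < gamma -> 0 <= dist nrm gamma z z'.
Proof.
move=> hn g0; case: (hn) => h0 _ _ _; by rewrite /dist addr_ge0 // mulr_ge0 // divr_ge0 // ltW.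
Qed.

Lemma dist_refl (R : realType) m (nrm : 'rV[R]_m -> R) (gamma : R) z :
  is_norm nrm -> dist nrm gamma z z = 0.
Proof. by move=> hn; rewrite /dist !subrr nrm0// normr0 mulr0 addr0. Qed.

Lemma dist_tri (R : realType) m (nrm : 'rV[R]_m -> R) (gamma : R) z y x :
  is_norm nrm -> 0 < gamma ->
  dist nrm gamma z x <= dist nrm gamma z y + dist nrm gamma y x.
Proof.
move=> hn g0; case: (hn) => _ _ _ ht; rewrite /dist.
have e : z.1 - x.1 = (z.1 - y.1) + (y.1 - x.1) by rewrite addrA subrK.
have h1 := ht (z.1 - y.1) (y.1 - x.1); rewrite -e in h1.
have h2 : gamma / 2 * `|z.2 - x.2| <= gamma / 2 * (`|z.2 - y.2| + `|y.2 - x.2|).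
  apply: ler_wpM2l; [by rewrite divr_ge0 // ltW | exact: ler_distD].
rewrite mulrDr in h2; lra.
Qed.

Lemma rho_ge (R : realType) n (f : 'I_n -> R) i : f i <= \big[Num.max/0]_(j < n) f j.
Proof. exact: le_bigmax. Qed.

Lemma hfun_ge (R : realType) m k (nrm : 'rV[R]_m -> R) (gamma p : R)
  (Xi : set (pt R m)) (ell : 'rV[R]_k -> pt R m -> R) theta lam x :
  is_norm nrm -> 0 < p -> Xi x ->
  ((ell theta x)%:E <= hfun (dist nrm gamma) Xi p ell theta lam x)%E.
Proof.
move=> hn p0 Xx; apply: ereal_sup_ubound; exists x => //.
by rewrite dist_refl// powR0 ?gt_eqF// mulr0 subr0.
Qed.

Lemma hfun_le (R : realType) m k (nrm : 'rV[R]_m -> R) (gamma p : R)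
  (Xi : set (pt R m)) (ell : 'rV[R]_k -> pt R m -> R) theta x xi0 (c rho : R) :
  is_norm nrm -> 0 < gamma -> 1 <= p -> 0 <= c ->
  (forall z, Xi z -> ell theta z <= c * (1 + (dist nrm gamma z xi0) `^ p)) ->
  dist nrm gamma x xi0 <= rho ->
  (hfun (dist nrm gamma) Xi p ell theta (c * 2 `^ (p - 1)) x <=
    (c * (1 + 2 `^ (p - 1) * rho `^ p))%:E)%E.
Proof.
move=> hn g0 p1 c0 hell hrho; apply: ge_ereal_sup => _ [z Xz <-]; rewrite lee_fin.
have p0 : 0 <= p by rewrite (le_trans _ p1).
have nn : forall a b, dist nrm gamma a b \is Num.nneg.
  by move=> a b; rewrite nnegrE; exact: dist_ge0.
have D1 : dist nrm gamma z xi0 `^ p <= (dist nrm gamma z x + dist nrm gamma x xi0) `^ p.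
  apply: ge0_ler_powR => //; first by rewrite nnegrE addr_ge0 // -nnegrE.
  exact: dist_tri.
have D2 := @powD_le R p _ _ p1 (@dist_ge0 R m nrm gamma z x hn g0) (@dist_ge0 R m nrm gamma x xi0 hn g0).
have D3 : dist nrm gamma x xi0 `^ p <= rho `^ p.
  apply: ge0_ler_powR => //; rewrite nnegrE; exact: (le_trans (@dist_ge0 R m nrm gamma x xi0 hn g0) hrho).
have q0 : 0 <= 2 `^ (p - 1) :> R by apply: powR_ge0.
have E1 : c * dist nrm gamma z xi0 `^ p <= c * (2 `^ (p - 1) * (dist nrm gamma z x `^ p + dist nrm gamma x xi0 `^ p)).
  by apply: ler_wpM2l => //; apply: le_trans D1 D2.
have E2 : c * (2 `^ (p - 1) * dist nrm gamma x xi0 `^ p) <= c * (2 `^ (p - 1) * rho `^ p).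
  by apply: ler_wpM2l => //; apply: ler_wpM2l.
have E3 := hell z Xz.
rewrite !mulrDr in E1 E2 E3 *; rewrite mulr1 in E3 *.
rewrite !mulrA in E1 E2 *; lra.
Qed.

Lemma inf_scale (R : realType) (c : R) (a : \bar R) (S : set (\bar R)) : 0 < c ->
  (forall y, S y -> (a <= c%:E * y)%E) -> (a <= c%:E * ereal_inf S)%E.
Proof.
move=> c0 hS.
have -> : a = (c%:E * (c^-1%:E * a))%E by rewrite muleA -EFinM mulfV ?gt_eqF // mul1e.
rewrite lee_pmul2l // ?lte_fin //; apply: le_ereal_inf_tmp => y Sy.
by rewrite -(@lee_pmul2l _ c%:E) // ?lte_fin // muleA -EFinM mulfV ?gt_eqF // mul1e hS.
Qed.

Theorem theorem1 (R : realType) (m k n : nat)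
  (nrm : 'rV[R]_m -> R) (gamma p sigma : R)
  (Xs : set 'rV[R]_m) (Ys : set R)
  (ell : 'rV[R]_k -> pt R m -> R) (Theta : set 'rV[R]_k)
  (C : 'rV[R]_k -> R) (xi0 : pt R m) (xi : 'I_n -> pt R m)
  (eps : R) (w : 'I_n -> R) :
  let Xi := Xs `*` Ys in
  let d := dist nrm gamma in
  let h := hfun d Xi p ell in
  let Pn := wemp (fun _ => n%:R^-1) xi in
  let tPn := wemp w xi in
  let H := Hw d Xi p ell (fun _ => n%:R^-1) xi in
  let tH := Hw d Xi p ell w xi in
  is_norm nrm -> 0 < gamma -> complete_in d Xi ->
  1 <= p -> 0 < sigma -> (0 < n)%N ->
  (forall i, Xi (xi i)) -> Xi xi0 ->
  (* loss: nonnegative, continuous in xi, growth bound *)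
  (forall theta z, Xi z -> 0 <= ell theta z) ->
  (forall theta, Theta theta -> forall z, Xi z -> forall e, 0 < e ->
     exists2 del, 0 < del & forall z', Xi z' -> d z' z < del ->
       `|ell theta z' - ell theta z| < e) ->
  (forall theta, Theta theta -> 0 < C theta) ->
  {within Theta, continuous C} ->
  (forall theta z, Theta theta -> Xi z ->
     ell theta z <= C theta * (1 + (d z xi0) `^ p)) ->
  (* standing assumption on kappa *)
  (forall theta, Theta theta ->
     [/\ kappa d Xi p ell xi0 theta \is a fin_num,
         forall i, (h theta (fine (kappa d Xi p ell xi0 theta)) (xi i) < +oo)%E &
         forall lam, (lam%:E < kappa d Xi p ell xi0 theta)%E ->
           forall i, h theta lam (xi i) = +oo%E]) ->
  (* standing fact: strong duality (for discrete distributions on the data) *)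
  (forall v : 'I_n -> R, (forall i, 0 <= v i) -> \sum_(i < n) v i = 1 ->
     forall theta, Theta theta ->
       risk d Xi p sigma ell (wemp v xi) theta =
       ereal_inf [set ((lam * sigma `^ p)%:E + Hw d Xi p ell v xi theta lam)%E
                   | lam in [set lam : R | 0 <= lam]]) ->
  (* hypotheses of the theorem *)
  0 < eps < 1 ->
  (forall i, 0 <= w i) -> \sum_(i < n) w i = 1 ->
  (forall theta, Theta theta -> forall lam : R,
     (kappa d Xi p ell xi0 theta <= lam%:E)%E ->
     lam <= tau d p sigma C xi xi0 theta ->
     ((1 - eps)%:E * H theta lam <= tH theta lam)%E /\
     (tH theta lam <= (1 + eps)%:E * H theta lam)%E) ->
  forall theta, Theta theta ->
    ((1 - eps)%:E * risk d Xi p sigma ell Pn theta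
       <= risk d Xi p sigma ell tPn theta)%E /\
    (risk d Xi p sigma ell tPn theta
       <= (1 + eps)%:E * risk d Xi p sigma ell Pn theta)%E.
Proof.
Proof.
move=> Xi d h Pn tPn H tH hn g0 _ p1 s0 n0 xiX xi0X ell0 _ C0 _ growth kap dual
  epsb w0 w1 hyp theta Th.
have p0 : 0 < p by rewrite (lt_le_trans _ p1).
case/andP: epsb => e0 e1.
set s := sigma `^ p.
have s_gt0 : 0 < s by apply: powR_gt0.
have sumn1 : \sum_(i < n) n%:R^-1 = 1 :> R.
  rewrite sumr_const card_ord; apply: (@eq_trans _ _ (n%:R^-1 * n%:R)); first by rewrite mulr_natr.
  by rewrite mulVf // pnatr_eq0 -lt0n.
rewrite /Pn /tPn (dual (fun=> n%:R^-1) _ sumn1 theta Th); last by move=> i; rewrite invr_ge0.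
rewrite (dual w w0 w1 theta Th).
set K := kappa d Xi p ell xi0 theta.
set T := tau d p sigma C xi xi0 theta.
set c := C theta.
set q := 2 `^ (p - 1) : R.
set rho := \big[Num.max/0]_(i < n) d (xi i) xi0.
set lam0 := c * q.
have c0 : 0 < c by apply: C0.
have q0 : 0 <= q by apply: powR_ge0.
have rp0 : 0 <= rho `^ p by apply: powR_ge0.
have Tdef : T = c * (q + (1 + q * rho `^ p) / s) by [].
have hterm : forall v : 'I_n -> R, (forall i, 0 <= v i) -> forall lam i,
    (0 <= (v i)%:E * hfun d Xi p ell theta lam (xi i))%E.
  move=> v v0 lam i; apply: mule_ge0; first by rewrite lee_fin.
  apply: le_trans (@hfun_ge R m k nrm gamma p Xi ell theta lam (xi i) hn p0 (xiX i)).
  by rewrite lee_fin ell0.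
have Hge0 : forall v : 'I_n -> R, (forall i, 0 <= v i) -> forall lam,
    (0 <= Hw d Xi p ell v xi theta lam)%E.
  by move=> v v0 lam; apply: sume_ge0 => i _; apply: hterm.
have Hoo : forall v : 'I_n -> R, (forall i, 0 <= v i) -> (exists i, 0 < v i) ->
    forall lam, (lam%:E < K)%E -> Hw d Xi p ell v xi theta lam = +oo%E.
  move=> v v0 [i vi] lam lK; apply/eqP; rewrite eq_le leey /=.
  rewrite /Hw (bigD1 i) //=.
  have [_ _ kinf] := kap theta Th.
  have -> : hfun d Xi p ell theta lam (xi i) = +oo%E by exact: kinf.
  rewrite gt0_muley ?lte_fin // addye //.
  rewrite gt_eqF // (lt_le_trans ltNy0) // sume_ge0 // => j _; exact: hterm.
rewrite -/s.
have pos_n : exists i : 'I_n, 0 < (fun=> n%:R^-1 : R) i.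
  by exists (Ordinal n0); rewrite /= invr_gt0 ltr0n.
have pos_w : exists i, 0 < w i.
  case: (pselect (exists i, 0 < w i)) => // nw; exfalso.
  have : \sum_(i < n) w i = 0.
    apply: big1 => i _; apply/eqP; rewrite eq_le w0 andbT leNgt; apply/negP => hi.
    by apply: nw; exists i.
  by rewrite w1 => /eqP; rewrite oner_eq0.
have Hb : (H theta lam0 <= (c * (1 + q * rho `^ p))%:E)%E.
  rewrite /H /Hw.
  apply: (@le_trans _ _ (\sum_(i < n) ((n%:R^-1)%:E * (c * (1 + q * rho `^ p))%:E))%E).
    apply: lee_sum => i _; apply: lee_wpmul2l; first by rewrite lee_fin invr_ge0.
    apply: hfun_le => //; first exact: ltW.
      by move=> z Xz; apply: growth.
    exact: rho_ge.
  by rewrite le_eqVlt; apply/orP; left; apply/eqP; rewrite sumEFin -mulr_suml sumn1 mul1r.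
have sT : T * s = lam0 * s + c * (1 + q * rho `^ p).
  by rewrite Tdef -mulrA mulrDl divfK ?gt_eqF // mulrDr mulrA.
have F0 : ((lam0 * s)%:E + H theta lam0 <= (T * s)%:E)%E.
  by rewrite sT EFinD; apply: leeD2l.
have lam0T : lam0 <= T.
  rewrite Tdef /lam0; apply: ler_wpM2l; first exact: ltW.
  by rewrite lerDl divr_ge0 ?addr_ge0 ?mulr_ge0 // ltW.
have lam00 : 0 <= lam0 by rewrite mulr_ge0 // ltW.
rewrite -/H -/tH.
have e10 : (0 <= (1 - eps)%:E)%E by rewrite lee_fin subr_ge0 ltW.
have e20 : (0 < (1 + eps)%:E)%E by rewrite lte_fin addr_gt0.
have lsge : forall l, 0 <= l -> (0 <= (l * s)%:E)%E.
  by move=> l l0; rewrite lee_fin mulr_ge0 // ltW.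
have Hnn : forall l, (0 <= H theta l)%E by move=> l; apply: Hge0 => i; rewrite invr_ge0.
have tHnn : forall l, (0 <= tH theta l)%E by move=> l; apply: Hge0.
have Tl_le : forall l, T < l -> ((T * s)%:E <= (l * s)%:E)%E.
  by move=> l Tl; rewrite lee_fin ler_wpM2r ?ltW.
split.
- apply: le_ereal_inf_tmp => _ [lam l0 <-].
  have [lK|Kl] := ltP (lam%:E) K.
    have -> : tH theta lam = +oo%E by exact: Hoo.
    by rewrite addey // leey.
  case: (leP lam T) => [lT|Tl].
    have [lo _] := hyp theta Th lam Kl lT.
    have : (ereal_inf [set (l * s)%:E + H theta l | l in [set l : R | (0 <= l)%R]]
        <= (lam * s)%:E + H theta lam)%E by apply: ereal_inf_lbound; exists lam.
    move/(lee_wpmul2l e10)/le_trans; apply.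
    rewrite ge0_muleDr ?lsge //; apply: leeD => //.
    by apply: gee_pMl => //; [exact: lsge | rewrite lee_fin gerBl ltW].
  have infF0 : (0 <= ereal_inf [set (l * s)%:E + H theta l | l in [set l : R | (0 <= l)%R]])%E.
    by apply: le_ereal_inf_tmp => _ [l l0' <-]; apply: adde_ge0 => //; exact: lsge.
  apply: le_trans (gee_pMl _ infF0 _) _ => //; first by rewrite lee_fin gerBl ltW.
  have : (ereal_inf [set (l * s)%:E + H theta l | l in [set l : R | (0 <= l)%R]]
        <= (lam0 * s)%:E + H theta lam0)%E by apply: ereal_inf_lbound; exists lam0.
  move/le_trans; apply.
  apply: le_trans F0 _; apply: le_trans (Tl_le _ Tl) _; exact: leeDl.
- apply: inf_scale; first by rewrite addr_gt0.
  move=> _ [lam l0 <-].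
  have Pf : forall l, 0 <= l -> l <= T ->
      (ereal_inf [set (l * s)%:E + tH theta l | l in [set l : R | (0 <= l)%R]] <=
       (1 + eps)%:E * ((l * s)%:E + H theta l))%E.
    move=> l l0' lT; have [lK|Kl] := ltP (l%:E) K.
      have -> : H theta l = +oo%E by exact: Hoo.
      by rewrite addey // gt0_muley // leey.
    have [_ hi] := hyp theta Th l Kl lT.
    apply: ge_ereal_inf; exists ((l * s)%:E + tH theta l); first by exists l.
    rewrite ge0_muleDr ?lsge //; apply: leeD => //.
    by apply: lee_pemull; [exact: lsge | rewrite lee_fin lerDl ltW].
  case: (leP lam T) => [lT|Tl]; first exact: Pf.
  apply: le_trans (Pf lam0 lam00 lam0T) _; apply: lee_wpmul2l; first exact: ltW.
  apply: le_trans F0 _; apply: le_trans (Tl_le _ Tl) _; exact: leeDl.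
Qed.
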